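(* Let $G=(V,E)$ be a graph on $n$ vertices, $w$ a legal weight assignment for $G$, $0<\beta<1$, and $(z_v)_{v\in V}$ complex activities with $|z_v|\ge1$ for all $v$, such that $Z_w(G)\neq0$. Then $\Re\left(\frac{\mathcal{D}_GZ_w(G)}{Z_w(G)}\right)\ge \frac n2$.
   Context: A weight assignment $w:V\to\mathbb{Z}_{>0}$ is legal if $w(v)\ge\deg(v)$ for every $v$. $Z_w(G)=\sum_{\sigma\in\{+,-\}^V}\beta^{d(\sigma)}\prod_{v:\sigma(v)=+}z_v^{w(v)}$, where $d(\sigma)$ is the number of edges $\{u,v\}$ with $\sigma(u)\ne\sigma(v)$, and $\mathcal{D}_G=\sum_{v\in V}z_v\frac{\partial}{\partial z_v}$. *)

(* Defs.v *)
(* Complex numbers are represented by an arbitrary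
   numeric closed field C (e.g. algC, or the complex numbers). *)
From HB Require Import structures.
From mathcomp Require Import all_boot all_order all_algebra.
Set Implicit Arguments. Unset Strict Implicit. Unset Printing Implicit Defensive.
Import Order.TTheory GRing.Theory Num.Theory.
Local Open Scope ring_scope.

Definition simple_graph (T : finType) (e : rel T) : Prop :=
  symmetric e /\ irreflexive e.

Definition deg (T : finType) (e : rel T) (v : T) : nat := #|[set u | e v u]|.

Definition edges (T : finType) (e : rel T) : {set {set T}} :=
  [set [set x.1; x.2] | x in [set x : T * T | e x.1 x.2]].

Definition legal (T : finType) (e : rel T) (w : T -> nat) : Prop :=
  forall v, (0 < w v)%N /\ (deg e v <= w v)%N.

(* spin configurations sigma : T -> bool, true = '+', false = '-' *)
Definition dcut (T : finType) (e : rel T) (s : {ffun T -> bool}) : nat :=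
  #|[set E0 in edges e | [exists u in E0, exists v in E0, s u != s v]]|.

Definition Zw (C : numClosedFieldType) (T : finType) (e : rel T) (w : T -> nat)
    (beta : C) (z : T -> C) : C :=
  \sum_(s : {ffun T -> bool}) beta ^+ dcut e s * \prod_(v | s v) z v ^+ w v.

(* D_G Z_w(G), where D_G = sum_v z_v d/dz_v.  Applied to the monomial
   prod_{v in S} z_v^{w v} this operator multiplies it by sum_{v in S} w v. *)
Definition DZw (C : numClosedFieldType) (T : finType) (e : rel T) (w : T -> nat)
    (beta : C) (z : T -> C) : C :=
  \sum_(s : {ffun T -> bool})
     beta ^+ dcut e s * ((\sum_(v | s v) w v)%N%:R * \prod_(v | s v) z v ^+ w v).

(* Main.v *)
Require Import Defs.
From HB Require Import structures.
From mathcomp Require Import all_boot all_order all_algebra.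
From mathcomp Require Import ring lra zify.
Import Order.TTheory GRing.Theory Num.Theory.
Set Implicit Arguments. Unset Strict Implicit.
Local Open Scope ring_scope.

Section S.
Variable C : numClosedFieldType.

Lemma re_inv_ge (a : C) : `|a| <= 1 -> a != 1 -> 1 / 2 <= 'Re ((1 - a)^-1).
Proof.
move=> ha a1; set b := 1 - a.
have b0 : b != 0 by rewrite subr_eq0 eq_sym.
have hb : `|1 - b| ^+ 2 <= 1 by rewrite /b opprB addrC subrK expr_le1.
rewrite ReV.
have nb : 0 < `|b| ^+ 2 by rewrite exprn_gt0 // normr_gt0.
rewrite ler_pdivlMr // mul1r.
have E : `|1 - b| ^+ 2 = 1 - 2 * 'Re b + `|b| ^+ 2.
  rewrite !normCK ReE rmorphB /= rmorph1; field.
  by [].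
rewrite E in hb.
have h2 : `|b| ^+ 2 <= 2 * 'Re b.
  rewrite -subr_ge0.
  have -> : 2 * 'Re b - `|b| ^+ 2 = 1 - (1 - 2 * 'Re b + `|b| ^+ 2) by ring.
  by rewrite subr_ge0.
by rewrite mulrC ler_pdivrMr ?ltr0n // mulrC.
Qed.


Lemma quad_root (A b D : C) : D != 0 ->
  exists r1 r2, [/\ A + b * r1 + D * r1 ^+ 2 = 0, A + b * r2 + D * r2 ^+ 2 = 0
     & r1 * r2 = A / D].
Proof.
move=> D0.
set d := sqrtC (b ^+ 2 - 4%:R * D * A).
have hd : d ^+ 2 = b ^+ 2 - 4%:R * D * A by rewrite sqrtCK.
have n2 : (2%:R : C) != 0 by rewrite pnatr_eq0.
exists ((- b + d) / (2%:R * D)), ((- b - d) / (2%:R * D)); split.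
- have -> : A + b * ((- b + d) / (2%:R * D)) + D * ((- b + d) / (2%:R * D)) ^+ 2
     = (d ^+ 2 - (b ^+ 2 - 4%:R * D * A)) / (4%:R * D).
    field; rewrite ?D0 ?n2 ?pnatr_eq0 //.
  by rewrite hd subrr mul0r.
- have -> : A + b * ((- b - d) / (2%:R * D)) + D * ((- b - d) / (2%:R * D)) ^+ 2
     = (d ^+ 2 - (b ^+ 2 - 4%:R * D * A)) / (4%:R * D).
    field; rewrite ?D0 ?n2 ?pnatr_eq0 //.
  by rewrite hd subrr mul0r.
- have -> : (- b + d) / (2%:R * D) * ((- b - d) / (2%:R * D))
     = (b ^+ 2 - d ^+ 2) / (4%:R * D ^+ 2).
    field; rewrite ?D0 ?n2 ?pnatr_eq0 //.
  rewrite hd. field; rewrite ?D0 ?n2 ?pnatr_eq0 //.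
Qed.

Lemma asano (A B C0 D : C) :
  (forall x y, `|x| < 1 -> `|y| < 1 -> A + B * x + C0 * y + D * x * y != 0) ->
  forall t, `|t| < 1 -> A + D * t != 0.
Proof.
move=> H t ht; apply/negP => /eqP E.
have A0 : A != 0.
  by have := H 0 0; rewrite normr0 ltr01 !mulr0 !addr0; apply.
have D0 : D != 0.
  by apply/negP => /eqP D0; move: E A0; rewrite D0 mul0r addr0 => ->; rewrite eqxx.
have [r1 [r2 [h1 h2 h12]]] := @quad_root A (B + C0) D D0.
have hA : A / D = - t by rewrite -(subr0 A) -E; field.
have hr : `|r1| * `|r2| < 1 by rewrite -normrM h12 hA normrN.
have key : forall r, A + (B + C0) * r + D * r ^+ 2 = 0 -> ~ `|r| < 1.
  move=> r hr0 hr1; have := H r r hr1 hr1.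
  have -> : A + B * r + C0 * r + D * r * r = A + (B + C0) * r + D * r ^+ 2 by ring.
  by rewrite hr0 eqxx.
have g1 : 1 <= `|r1|.
  by rewrite real_leNgt ?normr_real ?real1 //; apply/negP => /(key _ h1).
have g2 : 1 <= `|r2|.
  by rewrite real_leNgt ?normr_real ?real1 //; apply/negP => /(key _ h2).
have : 1 <= `|r1| * `|r2| by rewrite -[1]mulr1 ler_pM.
by rewrite real_leNgt ?hr ?real1 ?realM ?normr_real.
Qed.

Lemma edge_poly (beta : C) : beta \is Num.real -> 0 < beta -> beta < 1 ->
  forall y1 y2, `|y1| < 1 -> `|y2| < 1 -> 1 + beta * y1 + beta * y2 + y1 * y2 != 0.
Proof.
move=> br b0 b1 y1 y2 h1 h2; apply/negP => /eqP E.
set u := 1 + beta * y1; set v := beta + y1.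
have Euv : u = - (v * y2) by rewrite /u /v; apply/eqP; rewrite -subr_eq0 opprK -E; apply/eqP; ring.
have le : `|u| <= `|v|.
  rewrite Euv normrN normrM -[X in _ <= X]mulr1 ler_pM ?normr_ge0 //.
  exact: ltW.
have le2 : `|u| ^+ 2 <= `|v| ^+ 2 by rewrite lerXn2r ?nnegrE ?normr_ge0.
have D : `|u| ^+ 2 - `|v| ^+ 2 = (1 - beta ^+ 2) * (1 - `|y1| ^+ 2).
  rewrite !normCK /u /v !rmorphD /= rmorph1 rmorphM /= conj_Creal //; ring.
have pos : 0 < `|u| ^+ 2 - `|v| ^+ 2.
  rewrite D mulr_gt0 // subr_gt0.
    by rewrite expr_lt1 // ltW.
  by rewrite expr_lt1 ?normr_ge0.
by move: pos; rewrite subr_gt0 real_ltNge ?le2 ?realX ?normr_real.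
Qed.

Lemma edge_contract (beta : C) : beta \is Num.real -> 0 < beta -> beta < 1 ->
  forall A B C0 D : C,
  (forall p q, `|p| < 1 -> `|q| < 1 -> A + B * p + C0 * q + D * p * q != 0) ->
  forall s t, `|s| < 1 -> `|t| < 1 ->
    A + beta * B * s + beta * C0 * t + D * s * t != 0.
Proof.
move=> br b0 b1 A B C0 D H s t hs ht.
have step1 : forall x2 y2, `|x2| < 1 -> `|y2| < 1 ->
    (A + C0 * x2) * (1 + beta * y2) + (B + D * x2) * (beta + y2) * s != 0.
  move=> x2 y2 hx hy.
  apply: (@asano ((A + C0 * x2) * (1 + beta * y2)) ((B + D * x2) * (1 + beta * y2))
            ((A + C0 * x2) * (beta + y2)) ((B + D * x2) * (beta + y2))) => // x1 y1 hx1 hy1.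
  have -> : (A + C0 * x2) * (1 + beta * y2) + (B + D * x2) * (1 + beta * y2) * x1 +
     (A + C0 * x2) * (beta + y2) * y1 + (B + D * x2) * (beta + y2) * x1 * y1
     = (A + B * x1 + C0 * x2 + D * x1 * x2) * (1 + beta * y1 + beta * y2 + y1 * y2)
    by ring.
  by rewrite mulf_neq0 ?H ?edge_poly.
have := @asano (A + s * beta * B) (C0 + s * beta * D) (A * beta + s * B) (C0 * beta + s * D).
have -> : A + beta * B * s + beta * C0 * t + D * s * t
   = A + s * beta * B + (C0 * beta + s * D) * t by ring.
apply => // x2 y2 hx hy.
have -> : A + s * beta * B + (C0 + s * beta * D) * x2 + (A * beta + s * B) * y2 +
    (C0 * beta + s * D) * x2 * y2 =
    (A + C0 * x2) * (1 + beta * y2) + (B + D * x2) * (beta + y2) * s by ring.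
exact: step1.
Qed.

End S.

Section G.
Variables (C : numClosedFieldType) (T : finType).

Definition Pc (c : {ffun T -> bool} -> C) (x : T -> C) : C :=
  \sum_(s : {ffun T -> bool}) c s * \prod_(v | s v) x v.

Definition Rr (x : T -> C) (u v : T) (s : {ffun T -> bool}) :=
  \prod_(w | (w != u) && (w != v)) (if s w then x w else 1).
Definition Qq (c : {ffun T -> bool} -> C) (x : T -> C) (u v : T) (a b : bool) :=
  \sum_(s : {ffun T -> bool} | (s u == a) && (s v == b)) c s * Rr x u v s.

Lemma decomp (c : {ffun T -> bool} -> C) (x : T -> C) (u v : T) : u != v ->
  Pc c x = Qq c x u v false false + Qq c x u v true false * x u
         + Qq c x u v false true * x v + Qq c x u v true true * x u * x v.
Proof.
move=> huv.
have E : forall s : {ffun T -> bool}, \prod_(w | s w) x w =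
   (if s u then x u else 1) * ((if s v then x v else 1) * Rr x u v s).
  by move=> s; rewrite big_mkcond /= (bigD1 u) //= (bigD1 v) //= eq_sym huv.
have E2 : forall a b, \sum_(s : {ffun T -> bool} | (s u == a) && (s v == b)) c s * \prod_(w | s w) x w
   = Qq c x u v a b * ((if a then x u else 1) * (if b then x v else 1)).
  move=> a b; rewrite /Qq mulr_suml; apply: eq_bigr => s /andP [/eqP ha /eqP hb].
  by rewrite E ha hb; ring.
rewrite /Pc (bigID (fun s : {ffun T -> bool} => s u)) /=.
rewrite (bigID (fun s : {ffun T -> bool} => s v)) /=.
rewrite [X in _ + X](bigID (fun s : {ffun T -> bool} => s v)) /=.
rewrite (eq_bigl (fun s : {ffun T -> bool} => (s u == true) && (s v == true)));
  last by move=> s; rewrite !eqb_id.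
rewrite E2.
rewrite (eq_bigl (fun s : {ffun T -> bool} => (s u == true) && (s v == false)));
  last by move=> s; rewrite eqb_id eqbF_neg.
rewrite E2.
rewrite (eq_bigl (fun s : {ffun T -> bool} => (s u == false) && (s v == true)));
  last by move=> s; rewrite eqb_id eqbF_neg.
rewrite E2.
rewrite (eq_bigl (fun s : {ffun T -> bool} => (s u == false) && (s v == false)));
  last by move=> s; rewrite !eqbF_neg.
rewrite E2 /=; ring.
Qed.

Definition LY (c : {ffun T -> bool} -> C) :=
  forall x : T -> C, (forall v, `|x v| < 1) -> Pc c x != 0.

Lemma LY_edge (beta : C) : beta \is Num.real -> 0 < beta -> beta < 1 ->
  forall (c : {ffun T -> bool} -> C) (u v : T), u != v -> LY c ->
  LY (fun s => c s * beta ^+ (s u != s v)).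
Proof.
move=> br b0 b1 c u v huv H x hx.
have EQ : forall a b, Qq (fun s => c s * beta ^+ (s u != s v)) x u v a b =
    beta ^+ (a != b) * Qq c x u v a b.
  move=> a b; rewrite /Qq mulr_sumr; apply: eq_bigr => s /andP [/eqP -> /eqP ->].
  by rewrite mulrCA mulrA.
rewrite (decomp _ x huv) !EQ /= expr0 expr1 !mul1r.
have := @edge_contract C beta br b0 b1 (Qq c x u v false false) (Qq c x u v true false)
   (Qq c x u v false true) (Qq c x u v true true).
apply => //.
move=> p q hp hq.
pose x' := fun w => if w == u then p else if w == v then q else x w.
have hx' : forall w, `|x' w| < 1.
  by move=> w; rewrite /x'; case: ifP => _ //; case: ifP.
have R : forall a b, Qq c x' u v a b = Qq c x u v a b.
  move=> a b; apply: eq_bigr => s _; congr (_ * _); apply: eq_bigr => w /andP [wu wv].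
  by rewrite /x' (negbTE wu) (negbTE wv).
have := H x' hx'; rewrite (decomp _ x' huv) !R /x' eqxx (eq_sym v u) (negbTE huv) eqxx.
by [].
Qed.

Lemma LY_ext (c c' : {ffun T -> bool} -> C) : (forall s, c s = c' s) -> LY c -> LY c'.
Proof.
move=> E H x hx; have := H x hx; rewrite /Pc.
by rewrite (eq_bigr (fun s => c' s * \prod_(v | s v) x v)) // => s _; rewrite E.
Qed.

Lemma Pc_one (x : T -> C) : Pc (fun _ => 1) x = \prod_v (1 + x v).
Proof.
rewrite /Pc (eq_bigr (fun v => \sum_(b : bool) (if b then x v else 1))); last first.
  by move=> v _; rewrite big_bool /= addrC.
rewrite bigA_distr_bigA /=; apply: eq_bigr => s _.
by rewrite mul1r big_mkcond.
Qed.

Lemma LY_one : LY (fun _ => 1).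
Proof.
move=> x hx; rewrite Pc_one prodf_seq_neq0; apply/allP => v _ /=.
apply/negP; rewrite addrC addr_eq0 => /eqP E; have := hx v.
by rewrite E normrN normr1 ltxx.
Qed.

Definition cL (beta : C) (r : seq (T * T)) (s : {ffun T -> bool}) :=
  \prod_(p <- r) beta ^+ (s p.1 != s p.2).

Lemma LY_cL (beta : C) : beta \is Num.real -> 0 < beta -> beta < 1 ->
  forall r, (forall p, p \in r -> p.1 != p.2) -> LY (cL beta r).
Proof.
move=> br b0 b1; elim => [|p r IH] hr.
  by apply: (@LY_ext (fun _ => 1) _ _ (@LY_one)) => s; rewrite /cL big_nil.
have := @LY_edge beta br b0 b1 (cL beta r) p.1 p.2 (hr p (mem_head _ _)) (IH (fun q hq => hr q (mem_behead (s := p :: r) hq))).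
apply: LY_ext => s; by rewrite /cL big_cons mulrC.
Qed.

Definition negf (s : {ffun T -> bool}) : {ffun T -> bool} := [ffun v => ~~ s v].

Lemma negfK : involutive negf.
Proof. by move=> s; apply/ffunP => v; rewrite !ffunE negbK. Qed.

Lemma flip (c : {ffun T -> bool} -> C) : (forall s, c (negf s) = c s) -> LY c ->
  forall x : T -> C, (forall v, 1 < `|x v|) -> Pc c x != 0.
Proof.
move=> cs H x hx.
have x0 : forall v, x v != 0.
  by move=> v; rewrite -normr_gt0; apply: lt_trans (hx v).
have E : Pc c x = (\prod_v x v) * Pc c (fun v => (x v)^-1).
  rewrite /Pc (reindex_inj (can_inj negfK)) mulr_sumr; apply: eq_bigr => s _.
  rewrite cs mulrCA; congr (_ * _).
  rewrite (bigID (fun v => s v) predT) /= prodfV.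
  have nz : \prod_(v | s v) x v != 0 by rewrite prodf_seq_neq0; apply/allP => v _; apply/implyP => _; apply: x0.
  rewrite mulrAC divff // mul1r; apply: eq_bigl => v; by rewrite ffunE.
rewrite E mulf_neq0 //.
  by rewrite prodf_seq_neq0; apply/allP => v _; apply: x0.
apply: H => v; rewrite normfV invf_lt1 //.
exact: lt_trans (hx v).
Qed.
End G.

Section D.
Variables (T : finType) (e : rel T).

Definition D0 : {set T * T} :=
  [set p : T * T | e p.1 p.2 && (enum_rank p.1 < enum_rank p.2)%N].

Lemma dcut_card : simple_graph e -> forall s : {ffun T -> bool},
  dcut e s = #|[set p in D0 | s p.1 != s p.2]|.
Proof.
move=> [esym eirr] s; rewrite /dcut.
have -> : [set E0 in edges e | [exists u in E0, exists v in E0, s u != s v]]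
   = (fun p : T * T => [set p.1; p.2]) @: [set p in D0 | s p.1 != s p.2].
  apply/setP => E0; rewrite inE; apply/andP/imsetP.
  - case=> /imsetP [y]; rewrite inE => ey -> /existsP [u /andP [hu /existsP [v /andP [hv suv]]]].
    move: hu hv; rewrite !in_set2 => hu hv.
    have sy : s y.1 != s y.2.
      by move: suv; case/orP: hu => /eqP ->; case/orP: hv => /eqP ->; rewrite ?eqxx // eq_sym.
    have ny : y.1 != y.2 by apply/eqP => h; move: ey; rewrite h eirr.
    case: (ltngtP (enum_rank y.1) (enum_rank y.2)) => h.
    + by exists y; rewrite // !inE ey h sy.
    + exists (y.2, y.1); first by rewrite !inE /= esym ey h eq_sym sy.
      by apply/setP => t; rewrite !in_set2 orbC.
    + by move/val_inj/enum_rank_inj: h => h; rewrite h eqxx in ny.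
  - case=> p; rewrite !inE => /andP [/andP [ep rp] sp] ->; split.
      by apply/imsetP; exists p; rewrite // inE.
    by apply/existsP; exists p.1; rewrite set21 /=; apply/existsP; exists p.2; rewrite set22.
rewrite card_in_imset // => p q; rewrite !inE => /andP[/andP[_ rp] _] /andP[/andP[_ rq] _] E.
have h1 : p.1 \in [set q.1; q.2] by rewrite -E set21.
have h2 : p.2 \in [set q.1; q.2] by rewrite -E set22.
have h3 : q.1 \in [set p.1; p.2] by rewrite E set21.
suff [r1 r2] : (enum_rank p.1 = enum_rank q.1 :> nat) /\ (enum_rank p.2 = enum_rank q.2 :> nat).
  move/val_inj/enum_rank_inj: r1; move/val_inj/enum_rank_inj: r2.
  by case: p {rp h1 h2 h3 E} => [? ?]; case: q {rq} => [? ?] /= -> ->.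
move: h1 h2 h3 rp rq; rewrite !in_set2.
move=> /orP[/eqP a1|/eqP a1] /orP[/eqP a2|/eqP a2] /orP[/eqP a3|/eqP a3];
  rewrite ?a1 ?a2 ?a3 /=; lia.
Qed.

End D.

Lemma roots_re (C : numClosedFieldType) (r : seq C) :
  (forall a, a \in r -> `|a| <= 1 /\ a != 1) ->
  (size r)%:R / 2 <= 'Re ((\prod_(a <- r) ('X - a%:P))^`().[1]
                           / (\prod_(a <- r) ('X - a%:P)).[1]).
Proof.
elim: r => [|a r IH] hr.
  by rewrite big_nil /= derivC horner0 mul0r mul0r ReE rmorph0 addr0 mul0r.
have [ha a1] := hr a (mem_head _ _).
have IH' := IH (fun b hb => hr b (mem_behead (s := a :: r) hb)).
have q0 : (\prod_(b <- r) ('X - b%:P)).[1] != 0.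
  rewrite horner_prod prodf_seq_neq0; apply/allP => b hb /=.
  have [_ b1] := hr b (mem_behead (s := a :: r) hb).
  by rewrite hornerXsubC subr_eq0 eq_sym.
have a0 : 1 - a != 0 by rewrite subr_eq0 eq_sym.
rewrite big_cons derivM derivXsubC mul1r !hornerE.
set Q := (\prod_(b <- r) ('X - b%:P)).
have -> : (Q.[1] + (1 - a) * Q^`().[1]) / ((1 - a) * Q.[1])
   = (1 - a)^-1 + Q^`().[1] / Q.[1] by field; rewrite a0 q0.
rewrite raddfD /= /= -add1n natrD mulrDl.
apply: lerD => //.
exact: re_inv_ge.
Qed.

Theorem theorem4 (C : numClosedFieldType) (T : finType) (e : rel T)
    (w : T -> nat) (beta : C) (z : T -> C) :
  simple_graph e ->
  legal e w ->
  beta \is Num.real -> 0 < beta -> beta < 1 ->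
  (forall v, 1 <= `|z v|) ->
  Zw e w beta z != 0 ->
  (#|T|%:R / 2 : C) <= 'Re (DZw e w beta z / Zw e w beta z).
Proof.
move=> hG hw br b0 b1 hz Z0.
pose c := fun s : {ffun T -> bool} => beta ^+ dcut e s.
pose r := enum (D0 e).
have cE : forall s, cL beta r s = c s.
  move=> s; rewrite /c /cL /r big_enum /= (dcut_card hG s) -prodr_const.
  rewrite big_mkcond [RHS]big_mkcond; apply: eq_bigr => p _; rewrite inE.
  by case: (p \in D0 e); case: (s p.1 != s p.2).
have hr : forall p, p \in r -> p.1 != p.2.
  move=> p; rewrite mem_enum inE => /andP [ep _]; apply/eqP => h.
  by move: ep; rewrite h hG.2.
have LYc : LY c := LY_ext cE (LY_cL br b0 b1 hr).
have csym : forall s, c (negf s) = c s.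
  move=> s; rewrite -!cE /cL; apply: eq_bigr => p _; by rewrite !ffunE; case: (s p.1); case: (s p.2).
have ext := flip csym LYc.
pose W := fun s : {ffun T -> bool} => (\sum_(v | s v) w v)%N.
pose X := fun s : {ffun T -> bool} => \prod_(v | s v) z v ^+ w v.
pose p : {poly C} := \sum_(s : {ffun T -> bool}) (c s * X s) *: 'X^(W s).
have hp : forall t, p.[t] = \sum_(s : {ffun T -> bool}) c s * X s * t ^+ W s.
  by move=> t; rewrite /p horner_sum; apply: eq_bigr => s _; rewrite hornerZ hornerXn.
have p1 : p.[1] = Zw e w beta z.
  by rewrite hp /Zw; apply: eq_bigr => s _; rewrite expr1n mulr1.
have dp1 : p^`().[1] = DZw e w beta z.
  rewrite /p raddf_sum horner_sum /DZw; apply: eq_bigr => s _.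
  rewrite /= derivZ derivXn hornerZ hornerMn hornerXn expr1n /X /c.
  by rewrite -mulrA [_ * (W s)%:R]mulrC.
have z0 : forall v, z v != 0.
  by move=> v; rewrite -normr_gt0; apply: lt_le_trans (hz v).
have pt : forall t, 1 < `|t| -> p.[t] != 0.
  move=> t ht; have := ext (fun v => (t * z v) ^+ w v).
  have -> : Pc c (fun v => (t * z v) ^+ w v) = p.[t].
    rewrite /Pc hp; apply: eq_bigr => s _; rewrite /X.
    rewrite (eq_bigr (fun v => t ^+ w v * z v ^+ w v)); last by move=> v _; rewrite exprMn.
    by rewrite big_split /= prodrXr [t ^+ _ * _]mulrC mulrA.
  apply => v; rewrite normrX exprn_egt1 -?lt0n ?(hw v).1 //.
  apply: lt_le_trans ht _; rewrite normrM -{1}[`|t|]mulr1.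
  by rewrite ler_wpM2l ?normr_ge0.
pose Wt := (\sum_v w v)%N.
pose s1 : {ffun T -> bool} := [ffun _ => true].
have Ws1 : W s1 = Wt by rewrite /W /Wt; apply: eq_bigl => v; rewrite ffunE.
have Wlt : forall s, s != s1 -> (W s < Wt)%N.
  move=> s ns; case: (pickP (fun v => ~~ s v)) => [v hv | H]; last first.
    have E : s = s1 by apply/ffunP => v; rewrite ffunE; apply/negbFE; exact: H v.
    by rewrite E eqxx in ns.
  rewrite /W /Wt (bigID (fun v => s v) predT) /= -[X in (X < _)%N]addn0 ltn_add2l.
  by rewrite (bigD1 v) //= (leq_trans _ (leq_addr _ _)) // (hw v).1.
have cW : p`_Wt = c s1 * X s1.
  rewrite /p coef_sum (bigD1 s1) //= big1 ?addr0.
    by rewrite coefZ coefXn Ws1 eqxx mulr1.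
  move=> s ns; rewrite coefZ coefXn.
  by have := Wlt s ns; rewrite ltn_neqAle eq_sym => /andP [/negbTE -> _]; rewrite mulr0.
have cW0 : p`_Wt != 0.
  rewrite cW mulf_neq0 //; first by rewrite expf_neq0 // gt_eqF.
  by rewrite /X prodf_seq_neq0; apply/allP => v _; apply/implyP => _; rewrite expf_neq0.
have sizep : (Wt < size p)%N.
  rewrite ltnNge; apply/negP => /leq_sizeP /(_ Wt (leqnn _)) /eqP.
  by rewrite (negbTE cW0).
have WtT : (#|T| <= Wt)%N.
  by rewrite -sum1_card /Wt; apply: leq_sum => v _; exact: (hw v).1.
have [rs Ep] := closed_field_poly_normal p.
have pn0 : p != 0 by apply: contraNneq cW0 => ->; rewrite coef0.
have lc0 : lead_coef p != 0 by rewrite lead_coef_eq0.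
have srs : size p = (size rs).+1 by rewrite [in LHS]Ep size_scale // size_prod_XsubC.
have hrs : forall a, a \in rs -> `|a| <= 1 /\ a != 1.
  move=> a ha.
  have pa : p.[a] = 0.
    rewrite Ep hornerZ; have := root_prod_XsubC rs a; rewrite ha => /rootP ->.
    by rewrite mulr0.
  split.
    rewrite real_leNgt ?normr_real ?real1 //; apply/negP => h.
    by move: (pt a h); rewrite pa eqxx.
  by apply/eqP => a1; move: Z0; rewrite -p1 -a1 pa eqxx.
have q1 : (\prod_(a <- rs) ('X - a%:P)).[1] != 0.
  by apply/negP => /eqP h; move: Z0; rewrite -p1 Ep hornerZ h mulr0 eqxx.
rewrite -p1 -dp1 Ep derivZ !hornerZ -mulf_div divff // mul1r.
apply: le_trans (roots_re hrs).
rewrite ler_wpM2r ?invr_ge0 ?ler0n // ler_nat.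
by rewrite -ltnS -srs; apply: leq_ltn_trans WtT sizep.
Qed.
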